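(* Let $m,n$ be positive integers and let $R$ be an $m\times n$ rectangular permutation matrix. Then $\frac{1}{2}(R+R^\pi)$ is an extreme point of $\Gamma^\pi_{m,n}$ if and only if one of the following holds: (i) $m$ is even and $R$ is a centrosymmetric rectangular permutation matrix; (ii) $m$ is odd and $\tilde R$ is an $(m-1)\times n$ centrosymmetric rectangular permutation matrix, where $\tilde R$ is the matrix obtained from $R$ by deleting its center row (the $\frac{m+1}{2}$-th row).
   Context: A real $m\times n$ matrix is stochastic if its entries are nonnegative and each row sums to $1$. For $A=(a_{i,j})\in M_{p,n}$, $A^\pi$ is the $p\times n$ matrix with $(A^\pi)_{i,j}=a_{p+1-i,n+1-j}$; $A$ is centrosymmetric if $A=A^\pi$. $\Gamma^\pi_{m,n}$ is the convex set of $m\times n$ centrosymmetric stochastic matrices. A rectangular permutation matrix is a $(0,1)$-matrix with exactly one $1$ in each row. *)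

(* Defs.v *)
From HB Require Import structures.
From mathcomp Require Import all_boot all_order all_algebra.
From mathcomp Require Import zify.
Set Implicit Arguments. Unset Strict Implicit. Unset Printing Implicit Defensive.
Import Order.TTheory GRing.Theory Num.Theory.
Local Open Scope ring_scope.

Section Defs.
Variable R : realFieldType.

Definition mx_pi (p n : nat) (A : 'M[R]_(p, n)) : 'M[R]_(p, n) :=
  \matrix_(i, j) A (rev_ord i) (rev_ord j).

Definition centrosymmetric (p n : nat) (A : 'M[R]_(p, n)) : Prop :=
  A = mx_pi A.

Definition stochastic (p n : nat) (A : 'M[R]_(p, n)) : Prop :=
  (forall i j, 0 <= A i j) /\ (forall i, \sum_j A i j = 1).

Definition Gamma_pi (m n : nat) : 'M[R]_(m, n) -> Prop :=
  fun A => stochastic A /\ centrosymmetric A.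

Definition extreme_point (m n : nat) (S : 'M[R]_(m, n) -> Prop)
  (A : 'M[R]_(m, n)) : Prop :=
  S A /\
  forall (B C : 'M[R]_(m, n)) (t : R), S B -> S C -> 0 < t -> t < 1 ->
    A = t *: B + (1 - t) *: C -> B = A /\ C = A.

Definition rect_perm_mx (p n : nat) (A : 'M[R]_(p, n)) : Prop :=
  (forall i j, A i j = 0 \/ A i j = 1) /\
  (forall i, #|[set j | A i j == 1]| = 1%N).

End Defs.

(* index map 'I_(m-1) -> 'I_m skipping the center row m./2 (0-based),
   i.e. the ((m+1)/2)-th row (1-based) when m is odd *)
Lemma skip_center_proof (m : nat) (i : 'I_m.-1) : (bump m./2 i < m)%N.
Proof. case: i => i /= Hi; rewrite /bump; case: (m./2 <= i)%N; lia. Qed.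

Definition skip_center (m : nat) (i : 'I_m.-1) : 'I_m :=
  Ordinal (skip_center_proof i).

Definition del_center_row (R : realFieldType) (m n : nat) (A : 'M[R]_(m, n))
  : 'M[R]_(m.-1, n) :=
  \matrix_(i, j) A (skip_center i) j.

(* Main.v *)
Require Import Defs.
From HB Require Import structures.
From mathcomp Require Import all_boot all_order all_algebra.
From mathcomp Require Import zify ring lra.
Import Order.TTheory GRing.Theory Num.Theory.
Local Open Scope ring_scope.

Section Aux.
Variable R : realFieldType.

Lemma rp_sum m n (P : 'M[R]_(m,n)) : rect_perm_mx P -> forall i, \sum_j P i j = 1.
Proof.
case=> h01 hc i.
have -> : \sum_j P i j = \sum_j ((P i j == 1)%:R : R).
  apply: eq_bigr => j _; case: (h01 i j) => ->; rewrite ?eqxx //.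
  by rewrite eq_sym oner_eq0.
apply: (@etrans _ _ (#|[set j | P i j == 1]|)%:R); last by rewrite hc.
rewrite -[#|_|]sum1_card natr_sum [RHS]big_mkcond /=.
by apply: eq_bigr => j _; rewrite inE; case: (P i j == 1).
Qed.

Lemma rp_ge0 m n (P : 'M[R]_(m,n)) : rect_perm_mx P -> forall i j, 0 <= P i j.
Proof. by case=> h _ i j; case: (h i j) => ->. Qed.

Arguments rp_sum {m n P}.
Arguments rp_ge0 {m n P}.

Lemma le_sum1 n (f : 'I_n -> R) j : (forall k, 0 <= f k) -> f j <= \sum_k f k.
Proof. by move=> h; rewrite (bigD1 j) //= lerDl sumr_ge0. Qed.

Lemma le_sum2 n (f : 'I_n -> R) j k : (forall k, 0 <= f k) -> j != k ->
  f j + f k <= \sum_k f k.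
Proof.
move=> h jk; rewrite (bigD1 j) //= (bigD1 k) /=; last by rewrite eq_sym.
by rewrite addrA lerDl sumr_ge0.
Qed.

Lemma sumrev n (F : 'I_n -> R) : \sum_l F (rev_ord l) = \sum_l F l.
Proof. by rewrite [RHS](reindex_inj rev_ord_inj). Qed.

Lemma rev_ord_eq m (i : 'I_m) : (i == rev_ord i) = ((i:nat) * 2 + 1 == m)%N.
Proof.
rewrite -val_eqE /=; have := ltn_ord i => h.
by apply/eqP/eqP; lia.
Qed.

Section Main.
Variables (m n : nat) (P : 'M[R]_(m, n)).
Hypothesis hP : rect_perm_mx P.

Let A := 2^-1 *: (P + mx_pi P).

Definition Cond := forall i j, i != rev_ord i -> P i j = P (rev_ord i) (rev_ord j).

Lemma A_entry i j : A i j = 2^-1 * (P i j + P (rev_ord i) (rev_ord j)).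
Proof. by rewrite !mxE. Qed.

Lemma A_ge0 i j : 0 <= A i j.
Proof.
rewrite A_entry; apply: mulr_ge0; first by rewrite invr_ge0 ler0n.
by apply: addr_ge0; apply: rp_ge0.
Qed.

Lemma A_sum i : \sum_j A i j = 1.
Proof.
under eq_bigr do rewrite A_entry.
rewrite -mulr_sumr big_split /= (rp_sum hP).
rewrite (@sumrev _ (fun l => P (rev_ord i) l)) (rp_sum hP).
lra.
Qed.

Lemma A_centro i j : A (rev_ord i) (rev_ord j) = A i j.
Proof. by rewrite !A_entry !rev_ordK addrC. Qed.

Lemma A_gamma : Gamma_pi A.
Proof.
split; first by split; [exact: A_ge0 | exact: A_sum].
by apply/matrixP => i j; rewrite [RHS]mxE A_centro.
Qed.

Lemma ext_dir (HC : Cond) B C t : Gamma_pi B -> Gamma_pi C -> 0 < t -> t < 1 ->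
  A = t *: B + (1 - t) *: C -> B = A.
Proof.
move=> [[B0 B1] Bc] [[C0 C1] Cc] t0 t1 E.
have Eij i j : A i j = t * B i j + (1 - t) * C i j by rewrite E !mxE.
have Ble1 i j : B i j <= 1 by rewrite -(B1 i); apply: le_sum1.
have Cle1 i j : C i j <= 1 by rewrite -(C1 i); apply: le_sum1.
have Ble i j : B i j <= A i j.
  have := Eij i j; have := B0 i j; have := C0 i j; have := Ble1 i j; have := Cle1 i j.
  case: (eqVneq i (rev_ord i)) => hi.
  - rewrite A_entry -hi.
    have hP01 := (proj1 hP).
    have hBr : B i (rev_ord j) = B i j.
      by rewrite {2}Bc mxE -hi.
    case: (hP01 i j) => e1; case: (hP01 i (rev_ord j)) => e2; rewrite e1 e2.
    + nra.
    + have jj : j != rev_ord j.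
        by apply/eqP => ej; move: e2; rewrite -ej e1; lra.
      have := @le_sum2 _ (B i) j (rev_ord j) (B0 i) jj.
      rewrite hBr (B1 i); lra.
    + have jj : j != rev_ord j.
        by apply/eqP => ej; move: e2; rewrite -ej e1; lra.
      have := @le_sum2 _ (B i) j (rev_ord j) (B0 i) jj.
      rewrite hBr (B1 i); lra.
    + lra.
  - rewrite A_entry -(HC i j hi).
    case: (proj1 hP i j) => ->; [nra | lra].
apply/matrixP => i j; apply/eqP; rewrite eq_sym -subr_eq0; apply/eqP.
have hs : \sum_j (A i j - B i j) = 0 by rewrite sumrB A_sum B1 subrr.
by apply: (psumr_eq0P _ hs) => // k _; rewrite subr_ge0.
Qed.

Lemma cond_ext (HC : Cond) : extreme_point (@Gamma_pi R m n) A.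
Proof.
split; first exact: A_gamma.
move=> B C t GB GC t0 t1 E; split; first exact: (@ext_dir HC _ _ _ GB GC t0 t1 E).
apply: (@ext_dir HC _ _ (1 - t) GC GB); [lra | lra |].
by rewrite E addrC; congr (_ + _); congr (_ *: _); ring.
Qed.

Lemma ext_cond : extreme_point (@Gamma_pi R m n) A -> Cond.
Proof.
move=> [_ Hext] i j hi.
case: (eqVneq (P i j) (P (rev_ord i) (rev_ord j))) => // hne; exfalso.
have hri : (rev_ord i == i) = false by apply/negbTE; rewrite eq_sym.
pose Q := mx_pi P.
pose B : 'M[R]_(m, n) := \matrix_(k, l) if k == i then P k l
   else if k == rev_ord i then Q k l else A k l.
pose C : 'M[R]_(m, n) := \matrix_(k, l) if k == i then Q k l
   else if k == rev_ord i then P k l else A k l.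
have Q0 k l : 0 <= Q k l by rewrite mxE; apply: rp_ge0.
have Qs k : \sum_l Q k l = 1.
  under eq_bigr do rewrite mxE.
  by rewrite (@sumrev _ (fun l => P (rev_ord k) l)) (rp_sum hP).
have GB : Gamma_pi B.
  split; first split.
  - move=> k l; rewrite mxE; case: ifP => _; first exact: rp_ge0.
    by case: ifP => _; [exact: Q0 | exact: A_ge0].
  - move=> k; under eq_bigr do rewrite mxE.
    case: (k == i); first exact: rp_sum.
    by case: (k == rev_ord i); [exact: Qs | exact: A_sum].
  - apply/matrixP => k l; rewrite !mxE.
    case: (eqVneq k i) => [-> | ki].
      by rewrite hri eqxx ?rev_ordK.
    case: (eqVneq k (rev_ord i)) => [-> | kri].
      by rewrite rev_ordK eqxx ?mxE ?rev_ordK.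
    rewrite (can2_eq rev_ordK rev_ordK) (negbTE kri).
    by rewrite (inj_eq rev_ord_inj) (negbTE ki) !rev_ordK addrC.
have GC : Gamma_pi C.
  split; first split.
  - move=> k l; rewrite mxE; case: ifP => _; first exact: Q0.
    by case: ifP => _; [exact: rp_ge0 | exact: A_ge0].
  - move=> k; under eq_bigr do rewrite mxE.
    case: (k == i); first exact: Qs.
    by case: (k == rev_ord i); [exact: rp_sum | exact: A_sum].
  - apply/matrixP => k l; rewrite !mxE.
    case: (eqVneq k i) => [-> | ki].
      by rewrite hri eqxx ?rev_ordK.
    case: (eqVneq k (rev_ord i)) => [-> | kri].
      by rewrite rev_ordK eqxx ?mxE ?rev_ordK.
    rewrite (can2_eq rev_ordK rev_ordK) (negbTE kri).
    by rewrite (inj_eq rev_ord_inj) (negbTE ki) !rev_ordK addrC.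
have E : A = 2^-1 *: B + (1 - 2^-1) *: C.
  apply/matrixP => k l; rewrite !mxE.
  case: (eqVneq k i) => [-> | ki].
    rewrite ?mxE; lra.
  case: (eqVneq k (rev_ord i)) => [-> | kri].
    rewrite ?mxE; lra.
  lra.
have h0 : (0:R) < 2^-1 by lra.
have h1 : (2^-1 : R) < 1 by lra.
have [hB _] := Hext B C (2^-1) GB GC h0 h1 E.
move/matrixP: hB => /(_ i j); rewrite !mxE eqxx => h.
have e : P i j = P (rev_ord i) (rev_ord j) by lra.
by rewrite e eqxx in hne.
Qed.

End Main.

Lemma even_cond m n (P : 'M[R]_(m,n)) : ~~ odd m -> (Cond m n P <-> centrosymmetric P).
Proof.
move=> he; split.
- move=> HC; apply/matrixP => i j; rewrite mxE; apply: HC.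
  rewrite rev_ord_eq; apply/eqP => e; move: he; rewrite -e; lia.
- by move=> Hc i j _; rewrite {1}Hc mxE.
Qed.

Lemma skip_val m (i : 'I_m.-1) : val (skip_center i) = bump m./2 i.
Proof. by []. Qed.

Lemma skip_rev m (i : 'I_m.-1) : odd m ->
  skip_center (rev_ord i) = rev_ord (skip_center i).
Proof.
move=> ho; apply: val_inj => /=; rewrite /bump; have := ltn_ord i.
case: leqP => h1; case: leqP => h2 /=; lia.
Qed.

Lemma odd_cond m n (P : 'M[R]_(m,n)) : odd m ->
  (Cond m n P <-> centrosymmetric (del_center_row P)).
Proof.
move=> ho; split.
- move=> HC; apply/matrixP => i j; rewrite !mxE skip_rev //; apply: HC.
  rewrite rev_ord_eq skip_val /bump; have:= ltn_ord i; case: leqP => /= h; lia.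
- move=> Hc i j hi.
  have hk : (unbump m./2 i < m.-1)%N.
    move: hi; rewrite rev_ord_eq /unbump; have := ltn_ord i; case: ltnP => /= h; lia.
  have ei : skip_center (Ordinal hk) = i.
    apply: val_inj; move: hi; rewrite rev_ord_eq /= /bump /unbump.
    case: ltnP => /= h1; case: leqP => /= h2; lia.
  move/matrixP: Hc => /(_ (Ordinal hk) j); rewrite !mxE skip_rev // ei.
  by [].
Qed.

Lemma del_rect m n (P : 'M[R]_(m,n)) : rect_perm_mx P -> rect_perm_mx (del_center_row P).
Proof.
case=> h01 hc; split => i.
- by move=> j; rewrite mxE.
- rewrite -(hc (skip_center i)); apply: eq_card => j; by rewrite !inE mxE.
Qed.

End Aux.

Theorem mainTheorem4 (R : realFieldType) (m n : nat) (hm : (0 < m)%N) (hn : (0 < n)%N)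
  (P : 'M[R]_(m, n)) (hP : rect_perm_mx P) :
  extreme_point (@Gamma_pi R m n) (2^-1 *: (P + mx_pi P)) <->
  ((~~ odd m /\ centrosymmetric P /\ rect_perm_mx P) \/
   (odd m /\ centrosymmetric (del_center_row P) /\ rect_perm_mx (del_center_row P))).
Proof.
split.
- move=> Hext; have HC := @ext_cond R m n P hP Hext.
  case ho: (odd m).
  + right; split => //; split; [exact/(@odd_cond R m n P ho) | exact: del_rect].
  + left; split => //; split => //; exact/(@even_cond R m n P (negbT ho)).
- case => [[he [hc _]] | [ho [hc _]]]; apply: (@cond_ext R m n P hP).
  + exact/(@even_cond R m n P he).
  + exact/(@odd_cond R m n P ho).
Qed.
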